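(* Under the standing assumptions below, fix $i\in P$. Then the family $\{\,t^{\,i-r}e^r_j : r\in P,\ r<i,\ 1\le j\le b_r\,\}$ (indexed by the pairs $(r,j)$) is $R$-linearly independent in $M_i$.
   Context: Standing assumptions: $R$ is a principal ideal domain; $P$ is a lattice with a compatible abelian group structure ($(P,+,0)$ abelian group, $a\le b\Rightarrow a+c\le b+c$). $U_0=\{s\in P:s\ge 0\}$, $R[U_0]$ the monoid ring (finite sums $\sum c_st^s$, $c_s\in R$), graded by $\deg(ct^s)=s$. $M=\bigoplus_{a\in P}M_a$ is a $P$-graded $R[U_0]$-module (persistence module) that is graded projective, with each $M_a$ a finitely generated $R$-module. For $r\in P$, $D_r=\sum_{q<r}t^{\,r-q}M_q\subseteq M_r$; the quotient $M_r/D_r$ is a free $R$-module of finite rank $b_r$, and for each $r$ one fixes elements $e^r_1,\dots,e^r_{b_r}\in M_r\setminus D_r$ whose classes form an $R$-basis of $M_r/D_r$. *)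

(* Defs.v *)
From HB Require Import structures.
From mathcomp Require Import all_boot all_order all_algebra.
Set Implicit Arguments. Unset Strict Implicit. Unset Printing Implicit Defensive.
Import Order.TTheory GRing.Theory Num.Theory.
Local Open Scope ring_scope.

Definition is_sup (P : porderZmodType) (a b j : P) : Prop :=
  [/\ a <= j, b <= j & forall z, a <= z -> b <= z -> j <= z].
Definition is_inf (P : porderZmodType) (a b m : P) : Prop :=
  [/\ m <= a, m <= b & forall z, z <= a -> z <= b -> z <= m].
Definition is_lattice (P : porderZmodType) : Prop :=
  forall a b : P, (exists j, is_sup a b j) /\ (exists m, is_inf a b m).

Definition ordered_group (P : porderZmodType) : Prop :=
  forall a b c : P, a <= b -> a + c <= b + c.

Definition ideal_of (R : idomainType) (I : R -> Prop) : Prop :=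
  [/\ I 0, (forall x y, I x -> I y -> I (x + y)) & (forall r x, I x -> I (r * x))].
Definition is_PID (R : idomainType) : Prop :=
  forall I : R -> Prop, ideal_of I -> exists g : R, forall x, I x <-> exists r, x = r * g.

(* Persistence modules (P-graded R[U_0]-modules), presented as families of
   R-modules M_a with structure maps t^{b-a} : M_a -> M_b for a <= b
   (the values of pm_map for a not <= b are irrelevant and never used). *)
Record pmod (R : idomainType) d (P : porderType d) := PMod {
  pm_obj : P -> lmodType R;
  pm_map : forall a b : P, {linear pm_obj a -> pm_obj b}
}.

Definition is_pmod (R : idomainType) d (P : porderType d) (M : pmod R P) : Prop :=
  (forall a x, pm_map M a a x = x) /\
  (forall a b c x, (a <= b)%O -> (b <= c)%O ->
      pm_map M a c x = pm_map M b c (pm_map M a b x)).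

Definition pmod_hom (R : idomainType) d (P : porderType d) (M N : pmod R P)
    (phi : forall a, {linear pm_obj M a -> pm_obj N a}) : Prop :=
  forall a b x, (a <= b)%O -> phi b (pm_map M a b x) = pm_map N a b (phi a x).

Definition graded_projective (R : idomainType) d (P : porderType d) (M : pmod R P) : Prop :=
  forall (N N' : pmod R P), is_pmod N -> is_pmod N' ->
  forall (g : forall a, {linear pm_obj N a -> pm_obj N' a}),
    pmod_hom g -> (forall a y, exists x, g a x = y) ->
  forall (f : forall a, {linear pm_obj M a -> pm_obj N' a}), pmod_hom f ->
  exists h : forall a, {linear pm_obj M a -> pm_obj N a},
    pmod_hom h /\ forall a x, g a (h a x) = f a x.

Definition fin_gen (R : idomainType) (V : lmodType R) : Prop :=
  exists s : seq V, forall x : V, exists c : 'I_(size s) -> R,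
    x = \sum_(k < size s) c k *: s`_k.

(* Membership in D_r = sum_{q < r} t^{r-q} M_q  (a submodule of M_r). *)
Definition inD (R : idomainType) d (P : porderType d) (M : pmod R P) (r : P)
    (x : pm_obj M r) : Prop :=
  exists s : seq {q : P & pm_obj M q},
    all (fun p => (tag p < r)%O) s /\
    x = \sum_(p <- s) pm_map M (tag p) r (tagged p).

Arguments inD {R d P} M {r} x.

(* e_1,...,e_n in M_r \ D_r whose classes form an R-basis of M_r / D_r. *)
Definition quot_basis (R : idomainType) d (P : porderType d) (M : pmod R P) (r : P)
    (n : nat) (e : 'I_n -> pm_obj M r) : Prop :=
  [/\ forall j, ~ inD M (e j),
      forall x : pm_obj M r, exists c : 'I_n -> R,
        inD M (x - \sum_(j < n) c j *: e j)
    & forall c : 'I_n -> R, inD M (\sum_(j < n) c j *: e j) -> forall j, c j = 0].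

(* Main.v *)
Require Import Defs.
From HB Require Import structures.
From mathcomp Require Import all_boot all_order all_algebra.
From Stdlib Require Import ClassicalEpsilon.
Import Order.TTheory GRing.Theory.
Set Implicit Arguments. Unset Strict Implicit. Unset Printing Implicit Defensive.
Local Open Scope ring_scope.

Lemma inD0 (R : idomainType) (P : porderZmodType) (M : pmod R P) (r : P) :
  inD M (0 : pm_obj M r).
Proof. by exists [::]; rewrite big_nil. Qed.

Lemma inDD (R : idomainType) (P : porderZmodType) (M : pmod R P) (r : P)
  (x y : pm_obj M r) : inD M x -> inD M y -> inD M (x + y).
Proof.
move=> [s1 [h1 ->]] [s2 [h2 ->]]; exists (s1 ++ s2); split.
  by rewrite all_cat h1 h2.
by rewrite big_cat.
Qed.

Lemma inDZ (R : idomainType) (P : porderZmodType) (M : pmod R P) (r : P)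
  (k : R) (x : pm_obj M r) : inD M x -> inD M (k *: x).
Proof.
move=> [s [h ->]]; exists [seq existT (fun q => pm_obj M q) (tag p) (k *: tagged p) | p <- s]; split.
  by rewrite all_map; apply: sub_all h => p.
by rewrite big_map scaler_sumr; apply: eq_bigr => p _ /=; rewrite linearZ.
Qed.

Lemma inDB (R : idomainType) (P : porderZmodType) (M : pmod R P) (r : P)
  (x y : pm_obj M r) : inD M x -> inD M y -> inD M (x - y).
Proof. by move=> hx hy; apply: inDD hx _; rewrite -scaleN1r; apply: inDZ. Qed.

Definition coef (R : idomainType) (P : porderZmodType) (M : pmod R P)
  (b : P -> nat) (e : forall r : P, 'I_(b r) -> pm_obj M r) (a : P) (z : pm_obj M a)
  : 'I_(b a) -> R :=
  epsilon (inhabits (fun _ => 0)) (fun c => inD M (z - \sum_j c j *: e a j)).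


Lemma coef_spec (R : idomainType) (P : porderZmodType) (M : pmod R P)
  (b : P -> nat) (e : forall r : P, 'I_(b r) -> pm_obj M r) (a : P) (z : pm_obj M a) :
  quot_basis (e a) -> inD M (z - \sum_j coef e z j *: e a j).
Proof.
move=> [_ H2 _]; rewrite /coef; apply: (epsilon_spec (inhabits (fun _ => 0)) (fun c => inD M (z - \sum_j c j *: e a j))).
exact: H2.
Qed.

Lemma coef_uniq (R : idomainType) (P : porderZmodType) (M : pmod R P)
  (b : P -> nat) (e : forall r : P, 'I_(b r) -> pm_obj M r) (a : P) (z : pm_obj M a)
  (c : 'I_(b a) -> R) :
  quot_basis (e a) -> inD M (z - \sum_j c j *: e a j) -> forall j, coef e z j = c j.
Proof.
move=> hb hc j; have hs := @coef_spec _ _ _ _ e a z hb.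
case: hb => _ _ H3.
apply/eqP; rewrite -subr_eq0; apply/eqP; move: j; apply: H3.
have -> : \sum_(j0 < b a) (coef e z j0 - c j0) *: e a j0 =
   (z - \sum_j c j *: e a j) - (z - \sum_j coef e z j *: e a j).
  rewrite opprB addrC addrA subrK -sumrB; apply: eq_bigr => k _.
  by rewrite scalerBl.
exact: inDB.
Qed.

Lemma coef_lin (R : idomainType) (P : porderZmodType) (M : pmod R P)
  (b : P -> nat) (e : forall r : P, 'I_(b r) -> pm_obj M r) (a : P) (k : R)
  (x y : pm_obj M a) :
  quot_basis (e a) -> forall j, coef e (k *: x + y) j = k * coef e x j + coef e y j.
Proof.
move=> hb; apply: coef_uniq => //.
have -> : k *: x + y - \sum_j (k * coef e x j + coef e y j) *: e a j =
  k *: (x - \sum_j coef e x j *: e a j) + (y - \sum_j coef e y j *: e a j).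
  rewrite scalerBr scaler_sumr addrACA -opprD -big_split /=; congr (_ - _).
  by apply: eq_bigr => j _; rewrite scalerDl scalerA.
by apply: inDD; [apply: inDZ|]; apply: coef_spec.
Qed.

Lemma coef_D (R : idomainType) (P : porderZmodType) (M : pmod R P)
  (b : P -> nat) (e : forall r : P, 'I_(b r) -> pm_obj M r) (a : P)
  (x : pm_obj M a) :
  quot_basis (e a) -> inD M x -> forall j, coef e x j = 0.
Proof.
move=> hb hx; apply: (@coef_uniq _ _ _ _ e a x (fun _ => 0)) => //.
by rewrite big1 ?subr0 // => j _; rewrite scale0r.
Qed.

Lemma coef_e (R : idomainType) (P : porderZmodType) (M : pmod R P)
  (b : P -> nat) (e : forall r : P, 'I_(b r) -> pm_obj M r) (a : P) (j : 'I_(b a)) :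
  quot_basis (e a) -> forall k, coef e (e a j) k = (k == j)%:R.
Proof.
move=> hb; apply: coef_uniq => //.
rewrite (bigD1 j) //= eqxx scale1r big1 ?addr0 ?subrr; first exact: inD0.
by move=> k /negbTE ->; rewrite scale0r.
Qed.

Definition coefn (R : idomainType) (P : porderZmodType) (M : pmod R P)
  (b : P -> nat) (e : forall r : P, 'I_(b r) -> pm_obj M r) (a : P) (z : pm_obj M a)
  (n : nat) : R :=
  if insub n is Some k then coef e z k else 0.

Definition phi (R : idomainType) (P : porderZmodType) (M : pmod R P)
  (b : P -> nat) (e : forall r : P, 'I_(b r) -> pm_obj M r)
  (H : forall r, quot_basis (e r)) (r : P) (n : nat) (a : P) (z : pm_obj M a)
  : 'rV[R]_(a == r) := \row_(k < (a == r)) coefn e z n.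

Lemma phi_lin (R : idomainType) (P : porderZmodType) (M : pmod R P)
  (b : P -> nat) (e : forall r : P, 'I_(b r) -> pm_obj M r)
  (H : forall r, quot_basis (e r)) (r : P) (n : nat) (a : P) :
  linear (@phi R P M b e H r n a).
Proof.
move=> k x y; apply/matrixP => i j; rewrite !mxE /coefn.
case: insubP => [u _ _|_]; last by rewrite mulr0 addr0.
exact: coef_lin.
Qed.

HB.instance Definition _ (R : idomainType) (P : porderZmodType) (M : pmod R P)
  (b : P -> nat) (e : forall r : P, 'I_(b r) -> pm_obj M r)
  (H : forall r, quot_basis (e r)) (r : P) (n : nat) (a : P) :=
  GRing.isLinear.Build R (pm_obj M a) 'rV[R]_(a == r) *:%R (@phi R P M b e H r n a)
    (@phi_lin R P M b e H r n a).



Lemma rV0_eq (R : idomainType) n (x y : 'rV[R]_n) : n = 0%N -> x = y.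
Proof. by move=> n0; apply/matrixP => i [j hj]; exfalso; rewrite n0 in hj. Qed.

Lemma rowconst1 (R : idomainType) n (x : 'rV[R]_n) : (n <= 1)%N ->
  x *m const_mx 1 = x.
Proof.
case: n x => [|[|n]] x // _; first exact: rV0_eq.
apply/matrixP => i j; rewrite !mxE big_ord1 mxE mulr1 (ord1 j).
by rewrite (ord1 (Ordinal _)) .
Qed.

Lemma rowconstb (R : idomainType) n (x : 'rV[R]_n) (bb : bool) : bb -> (n <= 1)%N ->
  x *m const_mx bb%:R = x.
Proof. by case: bb => // _; apply: rowconst1. Qed.

Lemma mulmx_const0 (R : idomainType) m n p (x : 'M[R]_(m, n)) :
  x *m (const_mx 0 : 'M_(n, p)) = 0.
Proof. by apply/matrixP => i j; rewrite !mxE big1 // => k _; rewrite mxE mulr0. Qed.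

Lemma mulmx_constF (R : idomainType) m n p (x : 'M[R]_(m, n)) (bb : bool) :
  ~~ bb -> x *m (const_mx bb%:R : 'M_(n, p)) = 0.
Proof. by case: bb => // _; apply: mulmx_const0. Qed.

Lemma rowconst11 (R : idomainType) n (y : 'rV[R]_n) : (n <= 1)%N ->
  y *m (const_mx 1 : 'M_(n, 1)) *m const_mx 1 = y.
Proof.
case: n y => [|[|n]] y // _; first exact: rV0_eq.
apply/matrixP => i j; rewrite !mxE big_ord1 !mxE big_ord1 mxE !mulr1 (ord1 j).
by rewrite (ord1 (Ordinal _)).
Qed.

Lemma row_extract (R : idomainType) m (hm : (0 < m)%N) (x : 'rV[R]_1) (c : R) :
  x *m (const_mx 1 : 'M_(1, m)) = \row_(k < m) c -> x 0 0 = c.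
Proof.
move/matrixP => /(_ 0 (Ordinal hm)); rewrite !mxE big_ord1 mxE mulr1.
by rewrite (ord1 (Ordinal _)).
Qed.

Definition Kmod (R : idomainType) (P : porderZmodType) (r : P) : pmod R P :=
  @PMod R _ P (fun a => ('rV[R]_(a == r) : lmodType R))
    (fun a b => mulmxr (const_mx (a == b)%:R)).

Definition K'mod (R : idomainType) (P : porderZmodType) (r : P) : pmod R P :=
  @PMod R _ P (fun a => ('rV[R]_1 : lmodType R))
    (fun a b => mulmxr ((((r <= a) || (a == b)))%:R%:M)).

Lemma Kmod_pmod (R : idomainType) (P : porderZmodType) (r : P) : is_pmod (Kmod R r).
Proof.
split=> [a x|a b c x hab hbc] /=; first by rewrite rowconstb // leq_b1.
have [<-|nab] := eqVneq a b; first by rewrite [in RHS]rowconstb // leq_b1.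
have nac : (a == c) = false.
  apply/negbTE; apply: contra nab => /eqP ac; subst c.
  by rewrite eq_le hab hbc.
by rewrite (@mulmx_constF _ _ _ _ _ _ (negbT nac)) (@mulmx_constF _ _ _ _ _ false isT) mul0mx.
Qed.

Lemma K'mod_pmod (R : idomainType) (P : porderZmodType) (r : P) : is_pmod (K'mod R r).
Proof.
split=> [a x|a b c x hab hbc] /=; first by rewrite eqxx orbT mulmx1.
rewrite !mul_mx_scalar scalerA -natrM.
case: (boolP (r <= a)) => ra /=.
  by rewrite (le_trans ra hab) muln1 scale1r.
have [ac|nac] := eqVneq a c; last first.
  have [ab|nab] := eqVneq a b; last by rewrite muln0.
  by subst b; rewrite (negbTE ra) (negbTE nac).
subst c; have ab : a = b by apply/eqP; rewrite eq_le hab hbc.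
by subst b; rewrite eqxx orbT.
Qed.

Definition gmap (R : idomainType) (P : porderZmodType) (r : P) (a : P) :
  {linear pm_obj (K'mod R r) a -> pm_obj (Kmod R r) a} :=
  mulmxr (const_mx 1 : 'M[R]_(1, a == r)).

Lemma gmap_hom (R : idomainType) (P : porderZmodType) (r : P) :
  pmod_hom (gmap R r).
Proof.
move=> a b x hab /=.
have [<-|nab] := eqVneq a b.
  by rewrite orbT mul_mx_scalar scale1r rowconstb // leq_b1.
rewrite orbF (@mulmx_constF _ _ _ _ _ false isT).
case: (boolP (r <= a)) => ra; last by rewrite mul_mx_scalar scale0r mul0mx.
apply: rV0_eq; apply/eqP; rewrite eqb0; apply/eqP => br; subst b.
by move: nab; rewrite eq_le hab ra.
Qed.

Lemma gmap_surj (R : idomainType) (P : porderZmodType) (r : P) a y :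
  exists x, gmap R r a x = y.
Proof. by exists (y *m const_mx 1); rewrite /= rowconst11 // leq_b1. Qed.

Lemma phi_hom (R : idomainType) (P : porderZmodType) (M : pmod R P)
  (b : P -> nat) (e : forall r : P, 'I_(b r) -> pm_obj M r)
  (H : forall r, quot_basis (e r)) (r : P) (n : nat) :
  is_pmod M ->
  pmod_hom (M := M) (N := Kmod R r) (fun a => (@phi R P M b e H r n a : {linear _ -> _})).
Proof.
move=> [HM1 HM2] a c z hac /=.
have [<-|nac] := eqVneq a c.
  by rewrite HM1 rowconstb // leq_b1.
rewrite (@mulmx_constF _ _ _ _ _ false isT).
apply/matrixP => i j; rewrite !mxE /coefn.
case: insubP => [u _ _|_] //; apply: coef_D => //.
exists [:: existT (fun q => pm_obj M q) a z]; split; last by rewrite big_seq1.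
by rewrite /= andbT lt_def eq_sym nac hac.
Qed.

Lemma coefn_e (R : idomainType) (P : porderZmodType) (M : pmod R P)
  (b : P -> nat) (e : forall r : P, 'I_(b r) -> pm_obj M r) (a : P) (j : 'I_(b a)) n :
  quot_basis (e a) -> coefn e (e a j) n = (nat_of_ord j == n)%:R.
Proof.
move=> hb; rewrite /coefn; case: insubP => [u _ un|hn].
  by rewrite coef_e // -un eq_sym.
case: eqP => // jn; move: hn; by rewrite -jn ltn_ord.
Qed.

Lemma main (R : idomainType) (P : porderZmodType) (M : pmod R P)
  (b : P -> nat) (e : forall r : P, 'I_(b r) -> pm_obj M r)
  (H : forall r, quot_basis (e r)) (i : P) :
  is_pmod M -> graded_projective M ->
  forall (s : seq {r : P & 'I_(b r)}) (c : {r : P & 'I_(b r)} -> R),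
    uniq s ->
    all (fun p => tag p < i) s ->
    \sum_(p <- s) c p *: pm_map M (tag p) i (e (tag p) (tagged p)) = 0 ->
    forall p0, p0 \in s -> (forall p, p \in s -> c p != 0 -> ~~ (tag p0 < tag p)) ->
    c p0 = 0.
Proof.
move=> HM HP s c us alls rel p0 p0s hmax.
case: p0 p0s hmax => r j0 p0s hmax /=.
set n := nat_of_ord j0.
have [h [hh hg]] := HP (K'mod R r) (Kmod R r) (@K'mod_pmod R P r) (@Kmod_pmod R P r)
  (@gmap R P r) (@gmap_hom R P r) (@gmap_surj R P r) _ (phi_hom H r n HM).
have := congr1 (fun x => (h i x) 0 0) rel.
rewrite linear_sum raddf0 mxE summxE /=.
rewrite big_seq (eq_bigr (fun p => c p * (p == existT _ r j0)%:R)); last first.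
  move=> [q j] ps /=.
  have qi : q < i by have := allP alls _ ps.
  rewrite linearZ mxE hh ?(ltW qi) //= mul_mx_scalar (lt_eqF qi) orbF mxE.
  case: (boolP (r <= q)) => rq; last first.
    rewrite mulr0n mul0r mulr0; case: eqP => [/(congr1 tag) /= qr|]; last by rewrite mulr0.
    by case/negP: rq; rewrite qr.
  have [qr|rlq] := eqVneq q r; last first.
    have lt : r < q by rewrite lt_def rlq rq.
    have -> : c (existT _ q j) = 0.
      by apply: (contraTeq (hmax _ ps)); rewrite /= lt.
    by rewrite !mul0r.
  subst q; rewrite mulr1n mul1r.
  have hm : (0 < (r == r))%N by rewrite eqxx.
  rewrite (row_extract hm (hg r (e r j))) coefn_e //.
  by rewrite eq_Tagged.
rewrite -big_seq (bigD1_seq _ p0s us) /= eqxx mulr1 big1 ?addr0 //.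
by move=> p /negbTE ->; rewrite mulr0.
Qed.

Lemma exists_max (T : eqType) (P : porderZmodType) (f : T -> P) (s : seq T) :
  s != [::] -> exists2 x, x \in s & forall y, y \in s -> ~~ (f x < f y).
Proof.
elim: s => // y l IH _.
case: (eqVneq l [::]) => [->|ln].
  by exists y; rewrite ?mem_seq1 // => z; rewrite mem_seq1 => /eqP ->; rewrite ltxx.
have [m ml hm] := IH ln.
case: (boolP (f m < f y)) => my.
  exists y; first by rewrite mem_head.
  move=> z; rewrite in_cons => /orP [/eqP ->|zl]; first by rewrite ltxx.
  by apply: contra (hm z zl) => yz; apply: lt_trans my yz.
exists m; first by rewrite in_cons ml orbT.
by move=> z; rewrite in_cons => /orP [/eqP ->|zl] //; apply: hm.
Qed.

Unset Implicit Arguments.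
Set Strict Implicit.

Theorem proposition3p17 (R : idomainType) (P : porderZmodType)
  (M : pmod R P) (b : P -> nat) (e : forall r : P, 'I_(b r) -> pm_obj M r) (i : P) :
  is_PID R ->
  is_lattice P ->
  ordered_group P ->
  is_pmod M ->
  graded_projective M ->
  (forall a : P, fin_gen (pm_obj M a)) ->
  (forall r : P, quot_basis (e r)) ->
  forall (s : seq {r : P & 'I_(b r)}) (c : {r : P & 'I_(b r)} -> R),
    uniq s ->
    all (fun p => tag p < i) s ->
    \sum_(p <- s) c p *: pm_map M (tag p) i (e (tag p) (tagged p)) = 0 ->
    forall p, p \in s -> c p = 0.
Proof.
move=> _ _ _ HM HP _ H s c us alls rel p ps.
apply/eqP; apply/negPn/negP => cp.
set s' := [seq q <- s | c q != 0].
have ps' : p \in s' by rewrite mem_filter cp.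
have ne : s' != [::] by apply/negP => /eqP e0; rewrite e0 in ps'.
have [x xs' hx] := exists_max (fun q : {r : P & 'I_(b r)} => tag q) ne.
move: xs'; rewrite mem_filter => /andP [cx xs].
have := main H HM HP us alls rel xs.
move=> /(_ _) cx0; move: cx; rewrite cx0 ?eqxx //.
by move=> q qs cq; apply: hx; rewrite mem_filter cq.
Qed.
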